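(* For any small cartesian closed category $\mathbf{C}$, there exist a set $S$ and an $S$-sorted CCC $\mathbf{CFam}_S\to\tilde{\mathbf{C}}$ such that $\mathbf{C}$ is equivalent to $\tilde{\mathbf{C}}$.
   Context: $\mathsf{BiMag}_S$ is the set of formal expressions generated inductively by: each $X\in S$, the symbol $1$, and $X\times Y$, $Y^X$ for $X,Y\in\mathsf{BiMag}_S$. $\mathbf{CFam}_S$ is the free cartesian closed category with object set $\mathsf{BiMag}_S$ and no generating morphisms. An $S$-sorted CCC is a CCC $\tilde{\mathbf{C}}$ with $\mathrm{Ob}(\tilde{\mathbf{C}})=\mathsf{BiMag}_S$ together with a cartesian closed functor $\iota:\mathbf{CFam}_S\to\tilde{\mathbf{C}}$ that is the identity on objects. *)

(* Defs.v *)
Set Implicit Arguments.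

Record CatOn (O : Type) := {
  Hom : O -> O -> Type;
  idm : forall A, Hom A A;
  cmp : forall A B D, Hom B D -> Hom A B -> Hom A D;
  cmp_id_l : forall A B (f : Hom A B), cmp (idm B) f = f;
  cmp_id_r : forall A B (f : Hom A B), cmp f (idm A) = f;
  cmp_assoc : forall A B D E (h : Hom D E) (g : Hom B D) (f : Hom A B),
      cmp h (cmp g f) = cmp (cmp h g) f }.
Arguments Hom {O} c _ _.
Arguments idm {O} c A.
Arguments cmp {O} c {A B D} _ _.

(* A small category: objects and hom-sets live in a fixed universe Type. *)
Record Category := mkCategory { Ob : Type; cat :> CatOn Ob }.

Definition is_iso {O} (C : CatOn O) (A B : O) (f : Hom C A B) : Prop :=
  exists g : Hom C B A, cmp C g f = idm C A /\ cmp C f g = idm C B.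
Arguments is_iso {O} C {A B} f.

(* exp A B denotes the exponential B^A, with evaluation ev : B^A x A -> B. *)
Record CCCOn {O} (C : CatOn O) := {
  one : O;
  bang : forall X, Hom C X one;
  bang_uniq : forall X (f : Hom C X one), f = bang X;
  prod : O -> O -> O;
  pi1 : forall A B, Hom C (prod A B) A;
  pi2 : forall A B, Hom C (prod A B) B;
  pair : forall X A B, Hom C X A -> Hom C X B -> Hom C X (prod A B);
  pair_pi1 : forall X A B (f : Hom C X A) (g : Hom C X B),
      cmp C (pi1 A B) (pair X A B f g) = f;
  pair_pi2 : forall X A B (f : Hom C X A) (g : Hom C X B),
      cmp C (pi2 A B) (pair X A B f g) = g;
  pair_uniq : forall X A B (h : Hom C X (prod A B)),
      h = pair X A B (cmp C (pi1 A B) h) (cmp C (pi2 A B) h);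
  exp : O -> O -> O;
  ev : forall A B, Hom C (prod (exp A B) A) B;
  cur : forall X A B, Hom C (prod X A) B -> Hom C X (exp A B);
  cur_ev : forall X A B (f : Hom C (prod X A) B),
      cmp C (ev A B) (pair _ _ _ (cmp C (cur X A B f) (pi1 X A)) (pi2 X A)) = f;
  cur_uniq : forall X A B (h : Hom C X (exp A B)),
      h = cur X A B (cmp C (ev A B) (pair _ _ _ (cmp C h (pi1 X A)) (pi2 X A))) }.
Arguments one {O C} c.
Arguments bang {O C} c X.
Arguments prod {O C} c _ _.
Arguments pi1 {O C} c A B.
Arguments pi2 {O C} c A B.
Arguments pair {O C} c {X A B} _ _.
Arguments exp {O C} c _ _.
Arguments ev {O C} c A B.
Arguments cur {O C} c {X A B} _.

(* bexp X Y is the formal exponential Y^X. *)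
Inductive BiMag (S : Type) : Type :=
| bvar : S -> BiMag S
| bone : BiMag S
| bprod : BiMag S -> BiMag S -> BiMag S
| bexp : BiMag S -> BiMag S -> BiMag S.
Arguments bone {S}.

(* ---------- The free CCC CFam_S (no generating morphisms) ----------
   Morphisms A -> B of CFam_S are the terms Tm A B modulo the congruence
   TmEq generated by the CCC equations. *)
Inductive Tm (S : Type) : BiMag S -> BiMag S -> Type :=
| t_id : forall A, Tm A A
| t_comp : forall A B D, Tm B D -> Tm A B -> Tm A D
| t_bang : forall A, Tm A bone
| t_pi1 : forall A B, Tm (bprod A B) A
| t_pi2 : forall A B, Tm (bprod A B) B
| t_pair : forall X A B, Tm X A -> Tm X B -> Tm X (bprod A B)
| t_ev : forall A B, Tm (bprod (bexp A B) A) B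
| t_cur : forall X A B, Tm (bprod X A) B -> Tm X (bexp A B).
Arguments t_id {S} A.
Arguments t_comp {S A B D} _ _.
Arguments t_bang {S} A.
Arguments t_pi1 {S} A B.
Arguments t_pi2 {S} A B.
Arguments t_pair {S X A B} _ _.
Arguments t_ev {S} A B.
Arguments t_cur {S X A B} _.

Inductive TmEq (S : Type) : forall A B : BiMag S, Tm A B -> Tm A B -> Prop :=
| te_refl : forall A B (f : Tm A B), TmEq f f
| te_sym : forall A B (f g : Tm A B), TmEq f g -> TmEq g f
| te_trans : forall A B (f g h : Tm A B), TmEq f g -> TmEq g h -> TmEq f h
| te_comp : forall A B D (g g' : Tm B D) (f f' : Tm A B),
    TmEq g g' -> TmEq f f' -> TmEq (t_comp g f) (t_comp g' f')
| te_pair : forall X A B (f f' : Tm X A) (g g' : Tm X B),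
    TmEq f f' -> TmEq g g' -> TmEq (t_pair f g) (t_pair f' g')
| te_cur : forall X A B (f f' : Tm (bprod X A) B),
    TmEq f f' -> TmEq (t_cur f) (t_cur f')
| te_id_l : forall A B (f : Tm A B), TmEq (t_comp (t_id B) f) f
| te_id_r : forall A B (f : Tm A B), TmEq (t_comp f (t_id A)) f
| te_assoc : forall A B D E (h : Tm D E) (g : Tm B D) (f : Tm A B),
    TmEq (t_comp h (t_comp g f)) (t_comp (t_comp h g) f)
| te_bang : forall A (f : Tm A bone), TmEq f (t_bang A)
| te_pair_pi1 : forall X A B (f : Tm X A) (g : Tm X B),
    TmEq (t_comp (t_pi1 A B) (t_pair f g)) f
| te_pair_pi2 : forall X A B (f : Tm X A) (g : Tm X B),
    TmEq (t_comp (t_pi2 A B) (t_pair f g)) g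
| te_pair_eta : forall X A B (h : Tm X (bprod A B)),
    TmEq h (t_pair (t_comp (t_pi1 A B) h) (t_comp (t_pi2 A B) h))
| te_cur_ev : forall X A B (f : Tm (bprod X A) B),
    TmEq (t_comp (t_ev A B) (t_pair (t_comp (t_cur f) (t_pi1 X A)) (t_pi2 X A))) f
| te_cur_eta : forall X A B (h : Tm X (bexp A B)),
    TmEq h (t_cur (t_comp (t_ev A B) (t_pair (t_comp h (t_pi1 X A)) (t_pi2 X A)))).

(* ---------- S-sorted CCCs ----------
   A CCC Ct with object set BiMag S, together with a cartesian closed functor
   iota : CFam_S -> Ct that is the identity on objects.  A functor out of the
   quotient Tm/TmEq is given by a map on terms that respects TmEq and is
   functorial; it is cartesian closed when the canonical comparison maps
   iota(1) -> 1, iota(A x B) -> iota A x iota B and iota(B^A) -> (iota B)^(iota A)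
   are isomorphisms. *)
Record SSortedCCC (S : Type) := {
  sc_cat : CatOn (BiMag S);
  sc_ccc : CCCOn sc_cat;
  iota : forall A B : BiMag S, Tm A B -> Hom sc_cat A B;
  iota_resp : forall A B (f g : Tm A B), TmEq f g -> iota f = iota g;
  iota_id : forall A, iota (t_id A) = idm sc_cat A;
  iota_comp : forall A B D (g : Tm B D) (f : Tm A B),
      iota (t_comp g f) = cmp sc_cat (iota g) (iota f);
  iota_one : is_iso sc_cat (bang sc_ccc bone);
  iota_prod : forall A B : BiMag S,
      is_iso sc_cat (pair sc_ccc (iota (t_pi1 A B)) (iota (t_pi2 A B)));
  iota_exp : forall (A B : BiMag S)
      (psi : Hom sc_cat (prod sc_ccc (bexp A B) A) (bprod (bexp A B) A)),
      cmp sc_cat psi (pair sc_ccc (iota (t_pi1 (bexp A B) A)) (iota (t_pi2 (bexp A B) A)))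
        = idm sc_cat _ ->
      cmp sc_cat (pair sc_ccc (iota (t_pi1 (bexp A B) A)) (iota (t_pi2 (bexp A B) A))) psi
        = idm sc_cat _ ->
      is_iso sc_cat (cur sc_ccc (cmp sc_cat (iota (t_ev A B)) psi)) }.
Arguments sc_cat {S} s.
Arguments sc_ccc {S} s.
Arguments iota {S} s {A B} _.

Record Functor {O1} (C1 : CatOn O1) {O2} (C2 : CatOn O2) := {
  fobj : O1 -> O2;
  fmap : forall A B, Hom C1 A B -> Hom C2 (fobj A) (fobj B);
  fmap_id : forall A, fmap A A (idm C1 A) = idm C2 (fobj A);
  fmap_comp : forall A B D (g : Hom C1 B D) (f : Hom C1 A B),
      fmap A D (cmp C1 g f) = cmp C2 (fmap B D g) (fmap A B f) }.
Arguments fobj {O1 C1 O2 C2} _ _.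
Arguments fmap {O1 C1 O2 C2} _ {A B} _.

Definition Fid {O} (C : CatOn O) : Functor C C.
Proof.
  refine {| fobj := fun A => A; fmap := fun A B f => f |}; reflexivity.
Defined.

Definition Fcomp {O1 O2 O3} {C1 : CatOn O1} {C2 : CatOn O2} {C3 : CatOn O3}
  (G : Functor C2 C3) (F : Functor C1 C2) : Functor C1 C3.
Proof.
  refine {| fobj := fun A => fobj G (fobj F A);
            fmap := fun A B f => fmap G (fmap F f) |}.
  - intros A. rewrite !fmap_id. reflexivity.
  - intros A B D g f. rewrite !fmap_comp. reflexivity.
Defined.

Definition NatIso {O1} {C1 : CatOn O1} {O2} {C2 : CatOn O2}
  (F G : Functor C1 C2) : Prop :=
  exists eta : forall A, Hom C2 (fobj F A) (fobj G A),
    (forall A, is_iso C2 (eta A)) /\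
    (forall A B (f : Hom C1 A B),
        cmp C2 (eta B) (fmap F f) = cmp C2 (fmap G f) (eta A)).

Definition Equivalent {O1} (C1 : CatOn O1) {O2} (C2 : CatOn O2) : Prop :=
  exists (F : Functor C1 C2) (G : Functor C2 C1),
    NatIso (Fcomp G F) (Fid C1) /\ NatIso (Fcomp F G) (Fid C2).

(* Main.v *)
Require Import Defs.
Set Implicit Arguments.
Unset Strict Implicit.

Fixpoint interp (C : Category) (HC : CCCOn (cat C)) (A : BiMag (Ob C)) {struct A} : Ob C :=
  match A with
  | bvar x => x
  | bone => one HC
  | bprod A B => prod HC (interp HC A) (interp HC B)
  | bexp A B => exp HC (interp HC A) (interp HC B)
  end.
Arguments interp {C} HC A.

Definition TCat (C : Category) (HC : CCCOn (cat C)) : CatOn (BiMag (Ob C)).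
Proof.
  refine {| Hom := fun A B => Hom (cat C) (interp HC A) (interp HC B);
            idm := fun A => idm (cat C) (interp HC A);
            cmp := fun A B D g f => cmp (cat C) g f |}.
  - intros; apply cmp_id_l.
  - intros; apply cmp_id_r.
  - intros; apply cmp_assoc.
Defined.

Definition TCCC (C : Category) (HC : CCCOn (cat C)) : CCCOn (TCat HC).
Proof.
  unshelve refine (@Build_CCCOn _ (TCat HC) bone
            (fun X => bang HC (interp HC X)) _
            (fun A B => bprod A B)
            (fun A B => pi1 HC (interp HC A) (interp HC B))
            (fun A B => pi2 HC (interp HC A) (interp HC B))
            (fun X A B f g => @pair _ _ HC (interp HC X) (interp HC A) (interp HC B) f g)
            _ _ _
            (fun A B => bexp A B)
            (fun A B => ev HC (interp HC A) (interp HC B))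
            (fun X A B f => @cur _ _ HC (interp HC X) (interp HC A) (interp HC B) f)
            _ _).
  - intros; apply (bang_uniq HC).
  - intros; apply (pair_pi1 HC).
  - intros; apply (pair_pi2 HC).
  - intros; apply (pair_uniq HC).
  - intros; apply (cur_ev HC).
  - intros; apply (cur_uniq HC).
Defined.

Fixpoint iot (C : Category) (HC : CCCOn (cat C)) (A B : BiMag (Ob C)) (t : Tm A B)
  : Hom (cat C) (interp HC A) (interp HC B) :=
  match t in Tm A B return Hom (cat C) (interp HC A) (interp HC B) with
  | t_id A => idm (cat C) _
  | t_comp g f => cmp (cat C) (iot HC g) (iot HC f)
  | t_bang A => bang HC _
  | t_pi1 A B => pi1 HC _ _
  | t_pi2 A B => pi2 HC _ _
  | t_pair f g => pair HC (iot HC f) (iot HC g)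
  | t_ev A B => ev HC _ _
  | t_cur f => cur HC (iot HC f)
  end.
Arguments iot {C} HC {A B} t.

Lemma iot_resp (C : Category) (HC : CCCOn (cat C)) A B (f g : Tm A B) :
  TmEq f g -> iot HC f = iot HC g.
Proof.
  induction 1; simpl; try congruence.
  - apply cmp_id_l.
  - apply cmp_id_r.
  - apply cmp_assoc.
  - apply bang_uniq.
  - apply pair_pi1.
  - apply pair_pi2.
  - apply pair_uniq.
  - apply cur_ev.
  - apply cur_uniq.
Qed.

Lemma pair_id (C : Category) (HC : CCCOn (cat C)) (A B : Ob C) :
  pair HC (pi1 HC A B) (pi2 HC A B) = idm (cat C) _.
Proof.
  rewrite (pair_uniq HC _ _ _ (idm (cat C) (prod HC A B))).
  rewrite !cmp_id_r. reflexivity.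
Qed.

Lemma iso_bang (C : Category) (HC : CCCOn (cat C)) :
  is_iso (cat C) (bang HC (one HC)).
Proof.
  exists (bang HC (one HC)). split;
  rewrite (bang_uniq HC _ (cmp _ _ _)); symmetry; apply bang_uniq.
Qed.

Lemma iso_pair (C : Category) (HC : CCCOn (cat C)) (X Y : Ob C) :
  is_iso (cat C) (pair HC (pi1 HC X Y) (pi2 HC X Y)).
Proof.
  rewrite pair_id. exists (idm (cat C) _). split; apply cmp_id_l.
Qed.

Lemma iso_exp (C : Category) (HC : CCCOn (cat C)) (X Y : Ob C)
  (psi : Hom (cat C) (prod HC (exp HC X Y) X) (prod HC (exp HC X Y) X)) :
  cmp (cat C) psi (pair HC (pi1 HC (exp HC X Y) X) (pi2 HC (exp HC X Y) X)) = idm (cat C) _ ->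
  is_iso (cat C) (cur HC (cmp (cat C) (ev HC X Y) psi)).
Proof.
  intros H1. rewrite pair_id, cmp_id_r in H1. subst psi. rewrite cmp_id_r.
  assert (E : cur HC (ev HC X Y) = idm (cat C) _).
  { rewrite (cur_uniq HC _ _ _ (idm (cat C) (exp HC X Y))).
    rewrite cmp_id_l, pair_id, cmp_id_r. reflexivity. }
  rewrite E. exists (idm (cat C) _). split; apply cmp_id_l.
Qed.

Definition TS (C : Category) (HC : CCCOn (cat C)) : SSortedCCC (Ob C).
Proof.
  refine {| sc_cat := TCat HC; sc_ccc := TCCC HC; iota := fun A B t => iot HC t |}.
  - intros; apply iot_resp; assumption.
  - reflexivity.
  - reflexivity.
  - exact (iso_bang HC).
  - intros A B. exact (iso_pair HC (interp HC A) (interp HC B)).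
  - intros A B psi H1 H2. exact (@iso_exp C HC (interp HC A) (interp HC B) psi H1).
Defined.

Theorem mainTheorem8 (C : Category) (HC : CCCOn (cat C)) :
  exists (S : Type) (Ct : SSortedCCC S), Equivalent (cat C) (sc_cat Ct).
Proof.
  exists (Ob C), (TS HC).
  unshelve eexists.
  { refine (@Build_Functor _ (cat C) _ (sc_cat (TS HC)) (fun X => bvar X) (fun A B f => f) _ _); reflexivity. }
  unshelve eexists.
  { refine (@Build_Functor _ (sc_cat (TS HC)) _ (cat C) (fun A => interp HC A) (fun A B f => f) _ _); reflexivity. }
  split.
  - exists (fun A => idm (cat C) A). split.
    + intros A. exists (idm (cat C) A). split; apply cmp_id_l.
    + intros A B f. simpl. rewrite cmp_id_l, cmp_id_r. reflexivity.
  - unshelve eexists. { intros A. exact (idm (cat C) (interp HC A) : Hom (cat C) (interp HC (bvar (interp HC A))) (interp HC A)). } split.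
    + intros A. unfold is_iso; cbn. exists (idm (cat C) (interp HC A)). split; apply cmp_id_l.
    + intros A B f. simpl. rewrite cmp_id_l, cmp_id_r. reflexivity.
Qed.
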